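(* Let $\mathbb F$ be a field of characteristic $p>2$, let $m\ge 1$, and let $\mathfrak h_m$ be the Heisenberg Lie algebra over $\mathbb F$ with basis $e_1,\dots,e_{2m+1}$ and only nonzero brackets $[e_i,e_{m+i}]=-[e_{m+i},e_i]=e_{2m+1}$ for $1\le i\le m$. For $\lambda=(\lambda_1,\dots,\lambda_{2m+1})\in\mathbb F^{2m+1}$ let $\mathfrak h_m^\lambda$ denote $\mathfrak h_m$ with the restricted structure ($[p]$-operator) given by $\left(\sum_{i=1}^{2m+1}a_ie_i\right)^{[p]}=\left(\sum_{i=1}^{2m+1}a_i^p\lambda_i\right)e_{2m+1}$ (i.e. the unique $[p]$-operator with $e_i^{[p]}=\lambda_ie_{2m+1}$). Let $\lambda,\lambda'\in\mathbb F^{2m+1}$. Then $\mathfrak h_m^\lambda$ and $\mathfrak h_m^{\lambda'}$ are isomorphic as restricted Lie algebras if and only if there exist an invertible matrix $A=(a_{ij})\in\mathbb F^{2m\times 2m}$, a vector $k=(k_1,\dots,k_{2m})\in\mathbb F^{2m}$ and a scalar $\mu\in\mathbb F$ with $(\det A)^2=\mu^{2m}$ such that (1) $A\begin{pmatrix}0&I_m\\-I_m&0\end{pmatrix}A^{t}=\mu\begin{pmatrix}0&I_m\\-I_m&0\end{pmatrix}$; (2) $\mu\begin{pmatrix}\lambda_1\\ \vdots\\ \lambda_{2m}\end{pmatrix}=A^{[p]}\begin{pmatrix}\lambda'_1\\ \vdots\\ \lambda'_{2m}\end{pmatrix}+\lambda'_{2m+1}\begin{pmatrix}k_1^p\\ \vdots\\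 k_{2m}^p\end{pmatrix}$, where $A^{[p]}=(a_{ij}^p)$; (3) $\lambda_{2m+1}=\mu^{p-1}\lambda'_{2m+1}$.
   Context: A restricted Lie algebra isomorphism is a Lie algebra isomorphism $\Psi$ satisfying $\Psi(g^{[p]})=\Psi(g)^{[p]'}$ for all $g$. $I_m$ denotes the $m\times m$ identity matrix and $A^t$ the transpose of $A$. *)

(* Defs.v *)
From HB Require Import structures.
From mathcomp Require Import all_boot all_order all_algebra.
Set Implicit Arguments. Unset Strict Implicit. Unset Printing Implicit Defensive.
Import Order.TTheory GRing.Theory Num.Theory.
Local Open Scope ring_scope.

(* The Heisenberg Lie algebra h_m: coordinates w.r.t. the basis
   e_1, ..., e_{2m+1}; e_{j+1} corresponds to index j : 'I_((m+m).+1),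
   so e_{2m+1} is ord_max. *)
Definition heis (F : fieldType) (m : nat) := 'rV[F]_((m + m).+1).

Definition heis_z (F : fieldType) (m : nat) : heis F m :=
  delta_mx 0 ord_max.

Definition heis_bracket (F : fieldType) (m : nat) (x y : heis F m) : heis F m :=
  (\sum_(i < m) (x 0 (inord i) * y 0 (inord (m + i))
                 - x 0 (inord (m + i)) * y 0 (inord i))) *: heis_z F m.

Definition heis_pmap (F : fieldType) (m p : nat) (lam : 'rV[F]_((m + m).+1))
  (x : heis F m) : heis F m :=
  (\sum_(i < (m + m).+1) x 0 i ^+ p * lam 0 i) *: heis_z F m.

Definition restricted_iso (F : fieldType) (m p : nat)
  (lam lam' : 'rV[F]_((m + m).+1)) (Psi : heis F m -> heis F m) : Prop :=
  [/\ (forall (a : F) (x y : heis F m), Psi (a *: x + y) = a *: Psi x + Psi y),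
      bijective Psi,
      (forall x y, Psi (heis_bracket x y) = heis_bracket (Psi x) (Psi y))
    & (forall x, Psi (heis_pmap p lam x) = heis_pmap p lam' (Psi x))].

Definition restricted_isomorphic (F : fieldType) (m p : nat)
  (lam lam' : 'rV[F]_((m + m).+1)) : Prop :=
  exists Psi, restricted_iso p lam lam' Psi.

Definition symJ (F : fieldType) (m : nat) : 'M[F]_(m + m) :=
  block_mx 0 1%:M (- 1%:M) 0.

Definition lam_top (F : fieldType) (m : nat) (lam : 'rV[F]_((m + m).+1))
  : 'cV[F]_(m + m) :=
  \col_(i < m + m) lam 0 (widen_ord (leqnSn (m + m)) i).

Definition lam_last (F : fieldType) (m : nat) (lam : 'rV[F]_((m + m).+1)) : F :=
  lam 0 ord_max.

Definition mx_pow (F : fieldType) (r c p : nat) (A : 'M[F]_(r, c)) : 'M[F]_(r, c) :=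
  map_mx (fun a => a ^+ p) A.

(* Main.v *)
Require Import Defs.
From mathcomp Require Import all_boot all_order all_algebra.
From mathcomp Require Import ring zify.
Set Implicit Arguments. Unset Strict Implicit. Unset Printing Implicit Defensive.
Import Order.TTheory GRing.Theory Num.Theory.
Local Open Scope ring_scope.

Section Helpers.
Variable F : fieldType.

Definition topr n (x : 'rV[F]_n.+1) : 'rV[F]_n := \row_j x 0 (widen_ord (leqnSn n) j).
Definition lastr n (x : 'rV[F]_n.+1) : F := x 0 ord_max.
Definition mkr n (u : 'rV[F]_n) (c : F) : 'rV[F]_n.+1 :=
  \row_(i < n.+1) (if (insub (val i) : option 'I_n) is Some j then u 0 j else c).

Lemma top_mk n u c : topr (@mkr n u c) = u.
Proof.
apply/rowP => j; rewrite !mxE /=; case: insubP => [j' _ hj|].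
  by congr (u 0 _); apply/val_inj.
by rewrite ltn_ord.
Qed.

Lemma last_mk n u c : lastr (@mkr n u c) = c.
Proof. by rewrite /lastr mxE /=; case: insubP => [j' hj _|//]; rewrite ltnn in hj. Qed.

Lemma row_ext n (x y : 'rV[F]_n.+1) : topr x = topr y -> lastr x = lastr y -> x = y.
Proof.
move=> ht hl; apply/rowP => i; case: (unliftP ord_max i) => [j ->|->] //.
have := congr1 (fun v : 'rV[F]_n => v 0 j) ht; rewrite !mxE.
by have -> : lift ord_max j = widen_ord (leqnSn n) j by apply/val_inj; rewrite /= /bump leqNgt ltn_ord.
Qed.

Lemma toprDZ n a (x y : 'rV[F]_n.+1) : topr (a *: x + y) = a *: topr x + topr y.
Proof. by apply/rowP => j; rewrite !mxE. Qed.
Lemma lastrDZ n a (x y : 'rV[F]_n.+1) : lastr (a *: x + y) = a * lastr x + lastr y.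
Proof. by rewrite /lastr !mxE. Qed.
Lemma toprZ n a (x : 'rV[F]_n.+1) : topr (a *: x) = a *: topr x.
Proof. by apply/rowP => j; rewrite !mxE. Qed.
Lemma lastrZ n a (x : 'rV[F]_n.+1) : lastr (a *: x) = a * lastr x.
Proof. by rewrite /lastr !mxE. Qed.
Lemma topr0 n : topr (0 : 'rV[F]_n.+1) = 0.
Proof. by apply/rowP => j; rewrite !mxE. Qed.
Lemma lastr0 n : lastr (0 : 'rV[F]_n.+1) = 0.
Proof. by rewrite /lastr !mxE. Qed.

Lemma top_z n : topr (delta_mx 0 ord_max : 'rV[F]_n.+1) = 0.
Proof. by apply/rowP => j; rewrite !mxE /= -val_eqE /= ltn_eqF. Qed.
Lemma last_z n : lastr (delta_mx 0 ord_max : 'rV[F]_n.+1) = 1.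
Proof. by rewrite /lastr !mxE !eqxx. Qed.
Lemma top_delta n (j : 'I_n) :
  topr (delta_mx 0 (widen_ord (leqnSn n) j) : 'rV[F]_n.+1) = delta_mx 0 j.
Proof. by apply/rowP => i; rewrite !mxE /= -!val_eqE. Qed.
Lemma last_delta n (j : 'I_n) :
  lastr (delta_mx 0 (widen_ord (leqnSn n) j) : 'rV[F]_n.+1) = 0.
Proof. by rewrite /lastr !mxE /= -val_eqE /= gtn_eqF. Qed.

Lemma dd n (B : 'M[F]_n) (i j : 'I_n) : (delta_mx (0 : 'I_1) i *m (B *m (delta_mx (0 : 'I_1) j)^T)) 0 0 = B i j.
Proof. by rewrite mulmxA -rowE trmx_delta -colE !mxE. Qed.

End Helpers.
Lemma rowE0 (F : fieldType) r c (B : 'M[F]_(r, c)) i j : (row i B) 0 j = B i j.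
Proof. by rewrite mxE. Qed.
Section Heis.
Variables (F : fieldType) (m : nat).

Lemma bracketE (x y : heis F m) :
  heis_bracket x y = ((topr x *m symJ F m *m (topr y)^T) 0 0) *: heis_z F m.
Proof.
rewrite /heis_bracket; congr (_ *: _).
rewrite -[topr x]hsubmxK -[topr y]hsubmxK /symJ mul_row_block.
rewrite ?mulmx0 ?mul0mx ?mulmxN ?mulmx1 ?add0r ?addr0 tr_row_mx mul_row_col.
rewrite mulNmx [RHS]mxE [X in X + _]mxE !mxE sumrB addrC -sumrN.
have hl : forall i : 'I_m, inord i = widen_ord (leqnSn _) (lshift m i) :> 'I_(m+m).+1.
  by move=> i; apply/val_inj; rewrite /= inordK //; have := ltn_ord i; lia.
have hr : forall i : 'I_m, inord (m + i) = widen_ord (leqnSn _) (rshift m i) :> 'I_(m+m).+1.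
  by move=> i; apply/val_inj; rewrite /= inordK //; have := ltn_ord i; lia.
by rewrite -sumrN; congr (_ + _); apply: eq_bigr => i _; rewrite !mxE hl hr.
Qed.

Lemma pmapE p (lam x : heis F m) : heis_pmap p lam x =
  ((mx_pow p (topr x) *m lam_top lam) 0 0 + lastr x ^+ p * lastr lam) *: heis_z F m.
Proof.
rewrite /heis_pmap big_ord_recr /=; congr (_ *: _); congr (_ + _).
by rewrite mxE; apply: eq_bigr => j _; rewrite !mxE.
Qed.

Lemma JJ : symJ F m *m symJ F m = - 1%:M.
Proof.
rewrite /symJ mulmx_block ?mulmx0 ?mul0mx ?mulmx1 ?mulNmx ?mul1mx ?addr0 ?add0r.
by rewrite (scalar_mx_block m m 1) opp_block_mx !oppr0.
Qed.

End Heis.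

Lemma mpE (F : fieldType) p (h : p \in [pchar F]) r c (B : 'M[F]_(r, c)) :
  mx_pow p B = map_mx (pFrobenius_aut h) B.
Proof. by apply/matrixP => i j; rewrite !mxE. Qed.
Lemma fwd (F : fieldType) (p m : nat)
  (hp : prime p) (hchar : p \in [pchar F]) (hm : (1 <= m)%N)
  (lam lam' : 'rV[F]_((m + m).+1)) :
  restricted_isomorphic p lam lam' ->
  exists (A : 'M[F]_(m + m)) (k : 'cV[F]_(m + m)) (mu : F),
    [/\ A \in unitmx,
        \det A ^+ 2 = mu ^+ (2 * m),
        A *m symJ F m *m A^T = mu *: symJ F m,
        mu *: lam_top lam = mx_pow p A *m lam_top lam' + lam_last lam' *: mx_pow p k
      & lam_last lam = mu ^+ (p - 1) * lam_last lam'].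
Proof.
move=> [Psi [lin bij br pm]].
set z := heis_z F m.
have Padd : forall x y, Psi (x + y) = Psi x + Psi y.
  by move=> x y; have := lin 1 x y; rewrite !scale1r.
have P0 : Psi 0 = 0.
  have := Padd 0 0; rewrite addr0 => /(congr1 (fun v => v - Psi 0)).
  by rewrite subrr addrK.
have Pscale : forall a x, Psi (a *: x) = a *: Psi x.
  by move=> a x; rewrite -[a *: x]addr0 lin P0 addr0.
pose M := \matrix_(i, j) Psi (delta_mx 0 i) 0 j.
have PM : forall x, Psi x = x *m M.
  move=> x; rewrite {1}(row_sum_delta x) (big_morph Psi Padd P0) mulmx_sum_row.
  apply: eq_bigr => i _; rewrite Pscale; congr (_ *: _).
  by apply/rowP => j; rewrite !mxE.
set t := topr (Psi z); set mu := lastr (Psi z).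
have cz : forall y, heis_bracket z y = 0.
  by move=> y; rewrite bracketE top_z !mul0mx mxE scale0r.
have ht : t = 0.
  have h1 : forall y, heis_bracket (Psi z) y = 0.
    by move=> y; case: bij => g gK Kg; rewrite -[y]Kg -br cz P0.
  have h2 : t *m symJ F m = 0.
    apply/rowP => j; have := h1 (delta_mx 0 (widen_ord (leqnSn _) j)).
    rewrite bracketE top_delta => /(congr1 (@lastr _ _)).
    rewrite lastrZ last_z mulr1 lastr0 trmx_delta -mulmxA -colE => e.
    by rewrite [RHS]mxE -e colE mulmxA -colE [RHS]mxE.
  have : t *m (symJ F m *m symJ F m) = 0 by rewrite mulmxA h2 mul0mx.
  by rewrite JJ mulmxN mulmx1 => /eqP; rewrite oppr_eq0 => /eqP.
have mu0 : mu != 0.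
  apply/eqP => mu0.
  have : Psi z = Psi 0 by rewrite P0; apply: row_ext; rewrite ?topr0 ?lastr0.
  case: bij => g gK _ => /(congr1 g); rewrite !gK => /(congr1 (@lastr _ _)).
  by rewrite last_z lastr0 => /eqP; rewrite oner_eq0.
pose A : 'M[F]_(m + m) := \matrix_(i, j) M (widen_ord (leqnSn _) i) (widen_ord (leqnSn _) j).
pose k : 'cV[F]_(m + m) := \col_i M (widen_ord (leqnSn _) i) ord_max.
have topP : forall x, topr (Psi x) = topr x *m A.
  move=> x; apply/rowP => j; rewrite PM !mxE big_ord_recr /=.
  have : t 0 j = 0 by rewrite ht mxE.
  rewrite !mxE => ->; rewrite mulr0 addr0.
  by apply: eq_big => // i _; rewrite !mxE.
have lastP : forall x, lastr (Psi x) = (topr x *m k) 0 0 + mu * lastr x.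
  move=> x; rewrite /lastr PM !mxE big_ord_recr /=.
  congr (_ + _); first by apply: eq_big => // i _; rewrite !mxE.
  by rewrite mulrC /M mxE.
have hJ : A *m symJ F m *m A^T = mu *: symJ F m.
  apply/matrixP => i j.
  have := br (delta_mx 0 (widen_ord (leqnSn _) i)) (delta_mx 0 (widen_ord (leqnSn _) j)).
  move/(congr1 (@lastr _ _)).
  rewrite [in LHS]bracketE lastP toprZ top_z scaler0 mul0mx lastrZ last_z mulr1.
  rewrite bracketE lastrZ last_z mulr1 !topP !top_delta [(0 : 'M_(1,1)) 0 0]mxE add0r.
  rewrite trmx_mul -!mulmxA !dd => e.
  by rewrite -dd -!mulmxA -e [RHS]mxE.
have frE := mpE hchar.
set fr := pFrobenius_aut hchar in frE.
have pgt0 : (0 < p)%N by rewrite prime_gt0.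
have e0 : (0:F) ^+ p = 0 by rewrite expr0n gtn_eqF.
have hdet : \det A ^+ 2 = mu ^+ (2 * m).
  have dJ : \det (symJ F m) != 0.
    apply/eqP => d0; have := congr1 determinant (JJ F m).
    rewrite det_mulmx d0 mul0r -scaleN1r detZ det1 mulr1 => /esym/eqP.
    by rewrite expf_eq0 oppr_eq0 oner_eq0 andbF.
  have := congr1 determinant hJ; rewrite !det_mulmx det_tr detZ => e.
  by apply: (mulIf dJ); rewrite expr2 mul2n -addnn -e mulrAC.
exists A, k, mu; split.
- rewrite unitmxE unitfE; apply/eqP => d0; move: hdet; rewrite d0 expr0n /= => /eqP.
  by rewrite eq_sym expf_eq0 (negbTE mu0) andbF.
- exact: hdet.
- exact: hJ.
- apply/matrixP => j i; rewrite (ord1 i).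
  have := pm (delta_mx 0 (widen_ord (leqnSn _) j)).
  move/(congr1 (@lastr _ _)).
  rewrite pmapE lastP toprZ top_z scaler0 mul0mx lastrZ last_z mulr1.
  rewrite pmapE lastrZ last_z mulr1 topP lastP top_delta last_delta.
  rewrite !frE map_mxM map_delta_mx -!rowE -row_mul e0 mul0r addr0 mulr0 addr0.
  rewrite [(0 : 'M_(1,1)) 0 0]mxE add0r !rowE0 => e.
  rewrite [LHS]mxE [RHS]mxE [X in _ + X]mxE [(k ^ fr)%sesqui j 0]mxE e.
  by rewrite /lam_last /lastr mulrC.
- have := pm z; move/(congr1 (@lastr _ _)).
  rewrite pmapE lastP toprZ top_z scaler0 mul0mx lastrZ last_z mulr1.
  rewrite pmapE lastrZ last_z mulr1 topP lastP top_z !mul0mx frE expr1n mul1r.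
  have m0 : forall r c, map_mx fr (0 : 'M_(r,c)) = 0.
    by move=> r c; apply/matrixP=> a b; rewrite !mxE ?e0.
  rewrite !m0 !mul0mx last_z mulr1 [(0 : 'M_(1,1)) 0 0]mxE ?add0r.
  have mup : mu ^+ p = mu * mu ^+ (p - 1) by rewrite -exprS subn1 prednK.
  by rewrite mup -mulrA => /(mulfI mu0).
Qed.
Lemma bwd (F : fieldType) (p m : nat)
  (hp : prime p) (hchar : p \in [pchar F]) (hm : (1 <= m)%N)
  (lam lam' : 'rV[F]_((m + m).+1)) :
  (exists (A : 'M[F]_(m + m)) (k : 'cV[F]_(m + m)) (mu : F),
    [/\ A \in unitmx,
        \det A ^+ 2 = mu ^+ (2 * m),
        A *m symJ F m *m A^T = mu *: symJ F m,
        mu *: lam_top lam = mx_pow p A *m lam_top lam' + lam_last lam' *: mx_pow p k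
      & lam_last lam = mu ^+ (p - 1) * lam_last lam']) ->
  restricted_isomorphic p lam lam'.
Proof.
move=> [A [k [mu [Au hdet hJ hlam hlast]]]].
have mu0 : mu != 0.
  apply/eqP => mu0; move: hdet; rewrite mu0 expr0n muln_eq0 /= eqn0Ngt hm /= => /eqP.
  rewrite expf_eq0 /= => /eqP d0; move: Au; by rewrite unitmxE unitfE d0 eqxx.
pose Psi (x : heis F m) : heis F m :=
  mkr (topr x *m A) ((topr x *m k) 0 0 + mu * lastr x).
pose Phi (y : heis F m) : heis F m :=
  mkr (topr y *m invmx A) ((lastr y - (topr y *m invmx A *m k) 0 0) / mu).
have lk : forall a (u v : 'rV[F]_(m + m)), ((a *: u + v) *m k) 0 0 = a * (u *m k) 0 0 + (v *m k) 0 0.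
  by move=> a u v; rewrite mulmxDl -scalemxAl [LHS]mxE [X in X + _]mxE.
rewrite /restricted_isomorphic /restricted_iso; exists Psi; split.
- move=> a x y; apply: row_ext; rewrite !(top_mk, last_mk, toprDZ, lastrDZ).
    by rewrite mulmxDl scalemxAl.
  by rewrite lk; ring.
- exists Phi => x; apply: row_ext; rewrite !(top_mk, last_mk).
  + by rewrite mulmxK.
  + by rewrite mulmxK // addrC addKr mulrC mulKf.
  + by rewrite mulmxKV.
  + by rewrite [mu * _]mulrC divfK // addrC subrK.
- move=> x y; apply: row_ext; rewrite !(top_mk, last_mk).
    by rewrite !bracketE !toprZ !top_z !scaler0 mul0mx.
  rewrite !bracketE !lastrZ !toprZ !top_z !last_z !mulr1 !scaler0 mul0mx.
  rewrite [(0 : 'M_(1,1)) 0 0]mxE add0r !top_mk trmx_mul.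
  have -> : topr x *m A *m symJ F m *m (A^T *m (topr y)^T) =
            topr x *m (A *m symJ F m *m A^T) *m (topr y)^T by rewrite !mulmxA.
  by rewrite hJ -scalemxAr -scalemxAl [RHS]mxE.
- move=> x; apply: row_ext; rewrite !(top_mk, last_mk).
    by rewrite !pmapE !toprZ !top_z !scaler0 mul0mx.
  rewrite !pmapE !lastrZ !toprZ !top_z !last_z !mulr1 !scaler0 mul0mx.
  rewrite [(0 : 'M_(1,1)) 0 0]mxE add0r top_mk last_mk.
  have frE := mpE hchar.
  rewrite !frE in hlam *; rewrite map_mxM.
  set X := map_mx _ (topr x).
  have e1 := congr1 (fun B : 'cV_(m + m) => (X *m B) 0 0) hlam; simpl in e1.
  rewrite -scalemxAr [LHS]mxE mulmxDr -scalemxAr mulmxA [RHS]mxE [X in _ = _ + X]mxE in e1.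
  have e2 : ((topr x *m k) 0 0) ^+ p = (X *m map_mx (pFrobenius_aut hchar) k) 0 0.
    by rewrite -map_mxM [RHS]mxE.
  have e3 : forall a b : F, (a + b) ^+ p = a ^+ p + b ^+ p.
    by move=> a b; rewrite -!(pFrobenius_autE hchar) rmorphD.
  have mup : mu ^+ p = mu * mu ^+ (p - 1) by rewrite -exprS subn1 prednK // prime_gt0.
  rewrite /lam_last in hlast; rewrite /lastr in hlast *.
  rewrite mulrDr e1 e3 exprMn e2 hlast mup.
  rewrite /lam_last; set a := (X *m _ *m lam_top lam') 0 0; set b := (X *m _) 0 0.
  ring.
Qed.

Theorem theorem3p1 (F : fieldType) (p m : nat)
  (hp : prime p) (hchar : p \in [pchar F]) (hp2 : (2 < p)%N) (hm : (1 <= m)%N)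
  (lam lam' : 'rV[F]_((m + m).+1)) :
  restricted_isomorphic p lam lam' <->
  exists (A : 'M[F]_(m + m)) (k : 'cV[F]_(m + m)) (mu : F),
    [/\ A \in unitmx,
        \det A ^+ 2 = mu ^+ (2 * m),
        A *m symJ F m *m A^T = mu *: symJ F m,
        mu *: lam_top lam = mx_pow p A *m lam_top lam' + lam_last lam' *: mx_pow p k
      & lam_last lam = mu ^+ (p - 1) * lam_last lam'].
Proof.
split; [exact: fwd | exact: bwd].
Qed.
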